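(* $Z^*(G)=Z^*(\hat G)$. Moreover, there exists an optimal $\hat G$-r-forest (one attaining $Z^*(\hat G)$) with at most $2r-2$ non-terminal vertices.
   Context: Let $G=(V,E)$ be a connected undirected network with $n$ vertices and edge lengths $c_e>0$. Let $\mathcal R$ be a set of $r\ge2$ relevant pairs (r-pairs) of vertices, with $r$ a fixed constant. A terminal vertex is a vertex belonging to some r-pair. Problem A (general objective) on a network $H$ with vertex set $V$: build edges one at a time at unit speed from time $0$, in some sequence of distinct edges. The connection time of an r-pair $\{u,v\}$ is the earliest time at which $u$ and $v$ are joined by a path of completed edges. The objective $\Phi$ is a non-decreasing function of the connection times of the r-pairs (computable in $O(r)$ time from them), and is to be minimized. It suffices to consider sequences whose edges form a spanning tree of $H$. $\hat G$ is the metric closure of $G$: the complete network on $V$ whose edge $(u,v)$ has length equal to the shortest-path distance in $G$. $Z^*(G)$ and $Z^*(\hat G)$ denote the optimal objective values of Problem A on $G$ and on $\hat G$, respectively, with the same r-pairs and objective. An r-forest in $H$ is a subnetwork that is a forest, joins every r-pair by a path, and each of whose edges lies on the path of some r-pair. For an r-forest, its value is the minimum of $\Phi$ over all orderings of its edges, where the connection time of an r-pair is the completion time of the last-built edge of its path in the forest. A $\hat G$-r-forest is an r-forest in $\hat G$. It is optimal if its value equals $Z^*(\hat G)$. Its non-terminal vertices are its vertices that are not terminal vertices. *)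

(* Defs.v *)
From HB Require Import structures.
From mathcomp Require Import all_boot all_order all_algebra.
From mathcomp Require Import boolp reals.
Set Implicit Arguments. Unset Strict Implicit. Unset Printing Implicit Defensive.
Import Order.TTheory GRing.Theory Num.Theory.
Local Open Scope ring_scope.

Section Network.
Variables (V : finType) (R : realType).

(* A network on vertex set V is a symmetric adjacency relation [adj]
   (simple graph, no loops) together with edge lengths [len u v].
   Edges are written as ordered pairs (u,v); the edge they denote is the
   unordered pair {u,v}. *)

Definition uedge (e : V * V) : {set V} := [set e.1; e.2].

Definition erel (es : seq (V * V)) : rel V :=
  fun x y => ((x, y) \in es) || ((y, x) \in es).

Definition edge_seq (adj : rel V) (s : seq (V * V)) : bool :=
  all (fun e => adj e.1 e.2) s && uniq (map uedge s).

(* time at which the first k edges of s are completed (unit speed) *)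
Definition prefix_time (len : V -> V -> R) (s : seq (V * V)) (k : nat) : R :=
  \sum_(e <- take k s) len e.1 e.2.

(* connection time of {a,b}: the earliest time at which a and b are joined
   by a path of completed edges *)
Definition conn_time (len : V -> V -> R) (s : seq (V * V)) (a b : V) : R :=
  prefix_time len s
    (find (fun k => connect (erel (take k s)) a b) (iota 0 (size s).+1)).

Definition feasible r (p : 'I_r -> V * V) (adj : rel V) (s : seq (V * V)) :=
  edge_seq adj s /\ forall i, connect (erel s) (p i).1 (p i).2.

Definition objective r (p : 'I_r -> V * V) (Phi : ('I_r -> R) -> R)
    (len : V -> V -> R) (s : seq (V * V)) : R :=
  Phi (fun i => conn_time len s (p i).1 (p i).2).

(* z is the optimal value Z^*(H) of Problem A on H = (adj, len) *)
Definition is_opt_value r (p : 'I_r -> V * V) (Phi : ('I_r -> R) -> R)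
    (adj : rel V) (len : V -> V -> R) (z : R) : Prop :=
  (exists s, feasible p adj s /\ objective p Phi len s = z) /\
  (forall s, feasible p adj s -> z <= objective p Phi len s).

Fixpoint walk_len (len : V -> V -> R) (x : V) (q : seq V) : R :=
  if q is y :: q' then len x y + walk_len len y q' else 0.

Definition is_shortest_dist (adj : rel V) (len : V -> V -> R)
    (d : V -> V -> R) : Prop :=
  forall u v,
    (exists q, [/\ path adj u q, last u q = v & walk_len len u q = d u v]) /\
    (forall q, path adj u q -> last u q = v -> d u v <= walk_len len u q).

(* adjacency of the metric closure: the complete graph on V *)
Definition complete_adj : rel V := fun u v => u != v.

(* acyclicity of the graph spanned by an edge list: no cycle, i.e. no
   sequence of >= 3 distinct vertices, consecutive (cyclically) ones adjacent *)
Definition is_forest (F : seq (V * V)) : Prop :=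
  forall c : seq V, (3 <= size c)%N -> ~ ucycle (erel F) c.

Definition on_path (F : seq (V * V)) (a b : V) (e : V * V) : Prop :=
  exists q, [/\ path (erel F) a q, last a q = b, uniq (a :: q) &
    exists q1 q2, (a :: q = q1 ++ e.1 :: e.2 :: q2) \/
                  (a :: q = q1 ++ e.2 :: e.1 :: q2)].

Definition r_forest r (p : 'I_r -> V * V) (adj : rel V) (F : seq (V * V)) :=
  [/\ edge_seq adj F, is_forest F,
      (forall i, connect (erel F) (p i).1 (p i).2) &
      (forall e, e \in F -> exists i, on_path F (p i).1 (p i).2 e)].

(* connection time of {a,b} in the forest F built in order s (a permutation
   of F): completion time of the last built edge of its path in F *)
Definition forest_conn_time (len : V -> V -> R) (F s : seq (V * V))
    (a b : V) : R :=
  \big[Num.max/0]_(i < size s |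
      `[< on_path F a b (nth (a, a) s i) >]) prefix_time len s i.+1.

Definition forest_value r (p : 'I_r -> V * V) (Phi : ('I_r -> R) -> R)
    (len : V -> V -> R) (F : seq (V * V)) (z : R) : Prop :=
  let val s := Phi (fun i => forest_conn_time len F s (p i).1 (p i).2) in
  (exists s, perm_eq s F /\ val s = z) /\
  (forall s, perm_eq s F -> z <= val s).

Definition terminal r (p : 'I_r -> V * V) (v : V) : bool :=
  [exists i, (v == (p i).1) || (v == (p i).2)].

Definition nonterminals r (p : 'I_r -> V * V) (F : seq (V * V)) : {set V} :=
  [set v | has (fun e => (v == e.1) || (v == e.2)) F & ~~ terminal p v].

End Network.

(* Main.v *)
Require Import Defs.
From HB Require Import structures.
From mathcomp Require Import all_boot all_order all_algebra.
From mathcomp Require Import boolp reals.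
From mathcomp Require Import zify ring lra.
From Stdlib Require Import Lia.
Import Order.TTheory GRing.Theory Num.Theory.
Local Open Scope ring_scope.
Set Implicit Arguments. Unset Strict Implicit. Unset Printing Implicit Defensive.
Section Aux.
Variables (V : finType) (R : realType).
Implicit Types (s t : seq (V * V)) (len : V -> V -> R).

Lemma erel_sym s : symmetric (erel s).
Proof. by move=> x y; rewrite /erel orbC. Qed.

Lemma erel_sub s1 s2 : {subset s1 <= s2} -> subrel (erel s1) (erel s2).
Proof. by move=> sub x y; rewrite /erel => /orP[/sub -> | /sub ->]; rewrite ?orbT. Qed.

Lemma connect_mono (e1 e2 : rel V) : subrel e1 e2 -> forall a b, connect e1 a b -> connect e2 a b.
Proof. by move=> h; apply: connect_sub => x y /h; apply: connect1. Qed.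

Lemma connect_erel_sub s1 s2 a b : {subset s1 <= s2} -> connect (erel s1) a b -> connect (erel s2) a b.
Proof. by move=> h; apply: connect_mono; apply: erel_sub. Qed.

Lemma connect_take s k a b : connect (erel (take k s)) a b -> connect (erel s) a b.
Proof. by apply: connect_erel_sub => x /mem_take. Qed.

Lemma connect_symE s a b : connect (erel s) a b = connect (erel s) b a.
Proof. exact: (sym_connect_sym (@erel_sym s)). Qed.

Definition nonneg len s := forall e, e \in s -> 0 <= len e.1 e.2.

Lemma pt_mono len s k1 k2 : nonneg len s -> (k1 <= k2)%N ->
  prefix_time len s k1 <= prefix_time len s k2.
Proof.
move=> nn le; rewrite /prefix_time -(subnKC le) takeD big_cat /= lerDl.
rewrite big_seq_cond; apply: sumr_ge0 => e /andP[+ _] => /mem_take /mem_drop.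
exact: nn.
Qed.

Definition ck s a b := find (fun k => connect (erel (take k s)) a b) (iota 0 (size s).+1).

Lemma ct_def len s a b : conn_time len s a b = prefix_time len s (ck s a b).
Proof. by []. Qed.

Lemma ck_spec s a b : connect (erel s) a b ->
  (ck s a b <= size s)%N /\ connect (erel (take (ck s a b) s)) a b.
Proof.
move=> c.
have hh : has (fun k => connect (erel (take k s)) a b) (iota 0 (size s).+1).
  by apply/hasP; exists (size s); rewrite ?mem_iota ?take_size //=.
split; first by move: hh; rewrite has_find size_iota.
have := nth_find 0 hh; rewrite nth_iota //; by move: hh; rewrite has_find size_iota.
Qed.

Lemma ck_min s a b k : (k <= size s)%N -> connect (erel (take k s)) a b -> (ck s a b <= k)%N.
Proof.
move=> ks c; rewrite leqNgt; apply/negP => lt.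
have := before_find 0 lt; rewrite nth_iota ?c //; by rewrite ltnS.
Qed.

Lemma ct_le len s a b k : nonneg len s -> (k <= size s)%N ->
  connect (erel (take k s)) a b -> conn_time len s a b <= prefix_time len s k.
Proof. by move=> nn ks c; rewrite ct_def; apply: pt_mono => //; apply: ck_min. Qed.

Lemma ct_sim len len' s s' a b : nonneg len' s' -> connect (erel s) a b ->
  (forall k, (k <= size s)%N -> connect (erel (take k s)) a b ->
    exists k', [/\ (k' <= size s')%N, connect (erel (take k' s')) a b &
                   prefix_time len' s' k' <= prefix_time len s k]) ->
  connect (erel s') a b /\ conn_time len' s' a b <= conn_time len s a b.
Proof.
move=> nn c h; have [ck1 ck2] := ck_spec c.
have [k' [k'le c' le]] := h _ ck1 ck2.
split; first exact: connect_take c'.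
by rewrite (ct_def len); apply: le_trans le; apply: ct_le.
Qed.

End Aux.
Section Paths.
Variables (V : finType).
Implicit Types (s t : seq (V * V)).

Lemma path_pair (e : rel V) l1 x0 q x y l2 :
  path e x0 q -> x0 :: q = l1 ++ x :: y :: l2 -> e x y.
Proof.
elim: l1 x0 q => [|z l1 IH] x0 q pq /=.
  by case=> e1 e2; subst; case/andP: pq.
case=> e1; subst; case: q pq => [|w q] /=; first by case: l1 {IH}.
by case/andP=> _ pq eq; apply: (IH w q pq); rewrite eq.
Qed.

Lemma path_decomp (e e' : rel V) x0 q :
  (forall l1 x y l2, x0 :: q = l1 ++ x :: y :: l2 -> e x y -> e' x y) ->
  path e x0 q -> path e' x0 q.
Proof.
elim: q x0 => [|y q IH] x0 //= h /andP[exy pq]; apply/andP; split.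
  by apply: (h [::]).
apply: IH pq => l1 x z l2 eq; apply: (h (x0 :: l1)); by rewrite eq.
Qed.

Lemma connect_upath (e : rel V) a b : connect e a b ->
  exists q, [/\ path e a q, last a q = b & uniq (a :: q)].
Proof.
case/connectP=> q pq ->; case: (shortenP pq) => q' pq' uq' _.
by exists q'.
Qed.

Lemma uedge_sym (x y : V) : uedge (x, y) = uedge (y, x).
Proof. by rewrite /uedge /= setUC. Qed.

Lemma forest_nil : is_forest ([::] : seq (V * V)).
Proof. by move=> [|x [|y c]] //= _ /andP[/andP[]]. Qed.

Lemma forest_rcons t e : is_forest t -> ~~ connect (erel t) e.1 e.2 -> is_forest (rcons t e).
Proof.
move=> ft nc c sz /andP[cyc uq].
case: (boolP (all (fun x => erel t x (next c x)) c)) => [hall|].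
  apply: (ft c sz); apply/andP; split => //.
  by apply: cycle_from_next => // x xc; exact: (allP hall x xc).
case/allPn=> x xc nex.
have ex := next_cycle cyc xc.
have ee : ((x, next c x) == e) || ((next c x, x) == e).
  move: ex nex; rewrite /erel !mem_rcons !in_cons.
  by case: (_ == e); case: (_ == e); rewrite ?orbT //= => ->.
case: (rot_to xc) => i p def.
have cyc' : cycle (erel (rcons t e)) (x :: p) by rewrite -def rot_cycle.
have uq' : uniq (x :: p) by rewrite -def rot_uniq.
have nx : next (x :: p) x = next c x by rewrite -def next_rot.
have sz' : (3 <= size (x :: p))%N by rewrite -def size_rot.
case: p def cyc' uq' nx sz' => [|y [|y2 p']] // def cyc' uq' nx _.
rewrite /= eqxx in nx; rewrite -nx in ee.
set p := y2 :: p' in cyc' uq'.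
have : path (erel (rcons t e)) y (rcons p x) by case/andP: cyc'.
rewrite rcons_path => /andP[pp lst].
move: uq' => /= /andP[]; rewrite in_cons negb_or => /andP[xy xp] /andP[yp uqp].
have key : forall u w, u != x -> w != x -> erel (rcons t e) u w -> erel t u w.
  move=> u w ux wx; rewrite /erel !mem_rcons !in_cons.
  case/orP: ee => /eqP <-; rewrite !xpair_eqE.
    by rewrite (negbTE ux) (negbTE wx) ?andbF.
  by rewrite (negbTE ux) (negbTE wx) ?andbF.
have pt : path (erel t) y p.
  apply: (sub_in_path (P := predC1 x) _ _ pp).
    by move=> u w; rewrite !inE => ux wx; apply: key.
  apply/allP => u; rewrite in_cons => /orP[/eqP -> | up] /=; first by rewrite eq_sym.
  by apply: contraNneq xp => <-.
have lx : last y p != x.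
  have := mem_last y p; rewrite in_cons => /orP[/eqP -> | lp]; first by rewrite eq_sym.
  by apply: contraNneq xp => <-.
have ly : last y p != y.
  by rewrite /p /=; apply: contraNneq yp => <-; rewrite mem_last.
have lt : erel t (last y p) x.
  move: lst; rewrite /erel !mem_rcons !in_cons.
  case/orP: ee => /eqP <-; rewrite !xpair_eqE (negbTE lx) (negbTE ly) /= ?andbF //=.
have cyx : connect (erel t) y x.
  by apply/connectP; exists (rcons p x); rewrite ?rcons_path ?pt ?lt ?last_rcons.
case/orP: ee => /eqP ee'; move: nc; rewrite -ee' /= => /negP; apply => //.
by rewrite connect_symE.
Qed.

Lemma forest_cut (F : seq (V * V)) (e : V * V) : is_forest F -> e \in F -> e.1 != e.2 ->
  connect (erel [seq f <- F | uedge f != uedge e]) e.1 e.2 -> False.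
Proof.
move=> fF eF ne /connect_upath[q [pq lq uq]].
apply: (fF (e.1 :: q)).
  case: q pq lq uq => [|y [|y2 q]] //=.
    by move=> _ h; rewrite h eqxx in ne.
  move=> pq ly _; move: pq; rewrite ly /erel !mem_filter [uedge (e.2, e.1)]uedge_sym.
  by rewrite -surjective_pairing eqxx.
rewrite /ucycle uq andbT /= rcons_path; apply/andP; split.
  by apply: sub_path pq; apply: erel_sub => f; rewrite mem_filter => /andP[].
by rewrite lq /erel -surjective_pairing eF orbT.
Qed.

End Paths.
Section Count.
Variables (V : finType).
Implicit Types (s t : seq (V * V)).

Definition incid (v : V) (e : V * V) := (v == e.1) || (v == e.2).
Definition touched s v := has (incid v) s.
Definition deg s v := count (incid v) s.
Definition noA s := forall s1 e s2, s = s1 ++ e :: s2 -> ~~ connect (erel s1) e.1 e.2.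

Lemma handshake s : (forall e, e \in s -> e.1 != e.2) ->
  (\sum_(v : V) deg s v = 2 * size s)%N.
Proof.
move=> ne; rewrite /deg.
transitivity (\sum_(v : V) \sum_(e <- s) (incid v e : nat))%N.
  apply: eq_bigr => v _; rewrite -sum1_count big_mkcond /=.
  by apply: eq_bigr => e _; case: incid.
rewrite exchange_big /=.
transitivity (\sum_(e <- s) 2)%N.
  rewrite big_seq [RHS]big_seq; apply: eq_bigr => e es.
  rewrite -[2%N](_ : (e.1 != e.2).+1 = 2)%N; last by rewrite ne.
  rewrite -cards2 -sum1_card [RHS]big_mkcond /=; apply: eq_bigr => v _.
  by rewrite !inE /incid; case: (_ || _).
by rewrite big_const_seq count_predT iter_addn_0 mulnC.
Qed.

Lemma touched_path t a p : path (erel t) a p -> forall u, u \in p -> touched t u.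
Proof.
elim: p a => [|b p IH] a //= /andP[ab pb] u; rewrite in_cons => /orP[/eqP -> | up].
  move: ab; rewrite /erel /touched => /orP[h|h]; apply/hasP;
    [exists (a, b) | exists (b, a)] => //; by rewrite /incid eqxx ?orbT.
exact: IH pb u up.
Qed.

Lemma touched_conn t a b : connect (erel t) a b -> a != b -> touched t b.
Proof.
case/connectP => q pq ->; have := mem_last a q; rewrite in_cons => /orP[/eqP ->|].
  by rewrite eqxx.
by move=> h _; exact: touched_path pq _ h.
Qed.

Lemma touched_mem t e : e \in t -> touched t e.1 /\ touched t e.2.
Proof. by move=> et; split; apply/hasP; exists e; rewrite // /incid eqxx ?orbT. Qed.

Definition rk (v : V) : nat := enum_rank v.

Lemma rk_inj : injective rk.
Proof. by move=> x y /ord_inj /enum_rank_inj. Qed.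

Definition mn t x := [arg min_(z < x | connect (erel t) x z) rk z].

Lemma mnP t x : connect (erel t) x (mn t x) /\
  forall z, connect (erel t) x z -> (rk (mn t x) <= rk z)%N.
Proof. by rewrite /mn; case: arg_minnP => [|m cm minm]; [exact: connect0 | split]. Qed.

Lemma mem_take_le (T : eqType) (u : seq T) m n x : (m <= n)%N -> x \in take m u -> x \in take n u.
Proof. by move=> le; rewrite -(subnKC le) takeD mem_cat => ->. Qed.

Lemma noA_pos s (x0 : V * V) j : noA s -> (j < size s)%N ->
  ~~ connect (erel (take j s)) (nth x0 s j).1 (nth x0 s j).2.
Proof.
move=> hA lt; apply: (hA _ _ (drop j.+1 s)).
by rewrite -(drop_nth x0 lt) cat_take_drop.
Qed.

Lemma count_edges s (x0 : V * V) : noA s -> s != [::] ->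
  ((size s).+1 <= #|[set v | touched s v]|)%N.
Proof.
move=> hA sn.
pose e j := nth x0 s j. pose t j := take j s.
pose a (j : 'I_(size s)) := mn (t j) (e j).1.
pose b (j : 'I_(size s)) := mn (t j) (e j).2.
pose w j := if (rk (b j) < rk (a j))%N then a j else b j.
pose o j := if (rk (b j) < rk (a j))%N then b j else a j.
have W : forall j : 'I_(size s), [/\ (forall z, connect (erel (t j)) (w j) z -> (rk (w j) <= rk z)%N),
   connect (erel (t j.+1)) (w j) (o j), (rk (o j) < rk (w j))%N &
   exists2 x, (x = (e j).1 \/ x = (e j).2) & connect (erel (t j)) x (w j)].
  move=> j.
  have nc := noA_pos x0 hA (ltn_ord j).
  have [ca mina] := mnP (t j) (e j).1.
  have [cb minb] := mnP (t j) (e j).2.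
  have sym := sym_connect_sym (@erel_sym _ (t j)).
  have ab : a j != b j.
    apply: contraNneq nc => eab; apply: connect_trans ca _.
    by rewrite -/(a j) eab connect_symE.
  have rab : rk (a j) != rk (b j) by apply: contraNneq ab => /rk_inj ->.
  have sub : {subset t j <= t j.+1} by move=> x; apply: mem_take_le.
  have ej : e j \in t j.+1 by rewrite /t (take_nth x0 (ltn_ord j)) mem_rcons mem_head.
  have cab : connect (erel (t j.+1)) (a j) (b j).
    have c12 : connect (erel (t j.+1)) (e j).1 (e j).2.
      by apply: connect1; rewrite /erel -surjective_pairing ej.
    apply: connect_trans; first by rewrite connect_symE; apply: connect_erel_sub ca.
    by apply: connect_trans c12 _; apply: connect_erel_sub cb.
  rewrite /w /o; case: ltnP => hr; split.
  - move=> z cz; apply: mina; exact: connect_trans ca cz.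
  - exact: cab.
  - exact: hr.
  - by exists (e j).1; [left | ].
  - move=> z cz; apply: minb; exact: connect_trans cb cz.
  - by rewrite connect_symE.
  - by rewrite ltn_neqAle rab hr.
  - by exists (e j).2; [right | ].
have winj : injective w.
  have h : forall j j' : 'I_(size s), (j < j')%N -> w j = w j' -> False.
    move=> j j' lt eq.
    have [_ cwo ow _] := W j.
    have [minw' _ _ _] := W j'.
    have : connect (erel (t j')) (w j') (o j).
      by rewrite -eq; apply: connect_erel_sub cwo => x; apply: mem_take_le.
    by move/minw'; rewrite -eq leqNgt ow.
  move=> j j' eq; apply: val_inj; case: (ltngtP j j') => // lt.
    by case: (h _ _ lt eq).
  by case: (h _ _ lt (esym eq)).
have s0 : (0 < size s)%N by rewrite lt0n size_eq0.
pose e0 := nth x0 s 0.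
have te0 : touched s e0.1 by have [] := touched_mem (mem_nth x0 s0).
pose m0 := [arg min_(v < e0.1 | touched s v) rk v].
have [tm0 minm0] : touched s m0 /\ forall v, touched s v -> (rk m0 <= rk v)%N.
  by rewrite /m0; case: arg_minnP => // m tm mm; split.
have wT : forall j, w j \in [set v | touched s v] :\ m0.
  move=> j; have [_ cwo ow [x hx cxw]] := W j.
  rewrite !inE; apply/andP; split.
    apply/negP => /eqP ewm.
    have tso : touched s (o j).
      apply: (touched_conn (connect_take cwo)).
      by apply: contraTneq ow => ->; rewrite ltnn.
    by have := minm0 _ tso; rewrite -ewm leqNgt ow.
  case: (eqVneq x (w j)) => [<-|ne]; last exact: touched_conn (connect_take cxw) ne.
  have [h1 h2] := touched_mem (mem_nth x0 (ltn_ord j)).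
  by case: hx => ->.
have sub : [set w j | j : 'I_(size s)] \subset ([set v | touched s v] :\ m0).
  by apply/subsetP => v /imsetP[j _ ->]; exact: wT.
have := subset_leq_card sub; rewrite card_imset // card_ord.
by rewrite (cardsD1 m0 [set v | touched s v]) inE tm0 add1n ltnS.
Qed.


Lemma nonterm_bound r (p : 'I_r -> V * V) s (x0 : V * V) : noA s -> s != [::] ->
  (forall e, e \in s -> e.1 != e.2) ->
  (forall v, v \in nonterminals p s -> (3 <= deg s v)%N) ->
  (#|nonterminals p s| <= 2 * r - 2)%N.
Proof.
move=> hA sn ne h3.
set Tch := [set v | touched s v]. set Tm := [set v | terminal p v].
have NE : nonterminals p s = Tch :\: Tm by apply/setP => v; rewrite !inE andbC.
have hs := handshake ne.
have ce : (size s < #|Tch|)%N := count_edges x0 hA sn.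
have cT : (#|Tm| <= 2 * r)%N.
  have sub : Tm \subset [set (p i).1 | i : 'I_r] :|: [set (p i).2 | i : 'I_r].
    apply/subsetP => v; rewrite inE => /existsP[i /orP[/eqP -> | /eqP ->]];
      rewrite inE; apply/orP; [left|right]; apply/imsetP; by exists i.
  apply: leq_trans (subset_leq_card sub) _; apply: leq_trans (leq_card_setU _ _) _.
  by rewrite mul2n -addnn leq_add // (leq_trans (leq_imset_card _ _)) // card_ord.
have cI : (#|Tch :&: Tm| <= #|Tm|)%N by apply: subset_leq_card; apply: subsetIr.
have spl : #|Tch| = (#|Tch :&: Tm| + #|Tch :\: Tm|)%N by rewrite cardsID.
have sumge : (#|Tch :&: Tm| + 3 * #|Tch :\: Tm| <= \sum_(v : V) deg s v)%N.
  apply: (@leq_trans (\sum_(v in Tch) deg s v)).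
    rewrite (big_setID Tm) /= leq_add //.
      rewrite -[X in (X <= _)%N]muln1 -sum_nat_const; apply: leq_sum => v.
      by rewrite !inE => /andP[tv _]; rewrite -has_count.
    rewrite mulnC -sum_nat_const; apply: leq_sum => v vin; apply: h3; by rewrite NE.
  by rewrite [X in (_ <= X)%N](bigID (fun v => v \in Tch)) /= leq_addr.
rewrite NE; move: hs ce cT cI spl sumge.
set A := (\sum_(v : V) deg s v)%N.
set B := #|Tch :&: Tm|. set C := #|Tch :\: Tm|.
lia.
Qed.

End Count.
Section Tools.
Variables (V : finType).
Implicit Types (s t : seq (V * V)).

Lemma noA_forest s : noA s -> is_forest s.
Proof.
elim/last_ind: s => [|t e IH] hA; first exact: forest_nil.
apply: forest_rcons.
  apply: IH => s1 e' s2 def; apply: (hA s1 e' (rcons s2 e)).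
  by rewrite def rcons_cat.
by apply: (hA t e [::]); rewrite cats1.
Qed.

Definition other (v : V) (e : V * V) := if v == e.1 then e.2 else e.1.

Lemma nbr_in s v y : erel s v y -> exists2 g, g \in s & incid v g /\ y = other v g.
Proof.
rewrite /erel => /orP[h|h].
  by exists (v, y) => //; rewrite /incid /other /= eqxx.
exists (y, v) => //; rewrite /incid /other /= eqxx orbT; split => //.
by case: eqP.
Qed.

Lemma erel_drop_incid s1 s2 v x y : x != v -> y != v ->
  (forall g, g \in s1 -> g \notin s2 -> incid v g) -> erel s1 x y -> erel s2 x y.
Proof.
move=> xv yv h.
have key : forall g, g \in s1 -> g.1 != v -> g.2 != v -> g \in s2.
  move=> g gs g1 g2; apply: contraT => ng; have := h _ gs ng.
  by rewrite /incid => /orP[] /eqP e; [rewrite -e eqxx in g1 | rewrite -e eqxx in g2].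
rewrite /erel => /orP[g|g]; apply/orP; [left|right]; exact: key g _ _.
Qed.

Lemma bypass (R1 R2 : rel V) v a b : symmetric R1 -> a != v -> b != v ->
  (forall x y, x != v -> y != v -> R1 x y -> R2 x y) ->
  (forall y y', R1 v y -> R1 v y' -> connect R2 y y') ->
  connect R1 a b -> connect R2 a b.
Proof.
move=> sym av bv h1 h2.
pose Inv x := if x == v then (forall y, R1 v y -> connect R2 a y) else connect R2 a x.
have inv : forall q x, Inv x -> path R1 x q -> Inv (last x q).
  elim=> [|y q IH] x //= Ix /andP[xy pq]; apply: IH pq.
  rewrite /Inv; move: Ix; rewrite /Inv.
  case: (eqVneq x v) => [exv|xv]; case: (eqVneq y v) => [eyv|yv] //.
  - by move=> H; apply: H; rewrite -exv.
  - move=> cax y' vy'; apply: connect_trans cax _; apply: h2 vy'.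
    by rewrite sym -eyv.
  - by move=> cax; apply: connect_trans cax (connect1 _); apply: h1.
move=> /connectP[q pq eb]; rewrite eb.
move: (inv q a); rewrite /Inv (negbTE av) => /(_ (connect0 _ _) pq).
by rewrite -eb (negbTE bv).
Qed.

End Tools.
Section Tools2.
Variables (V : finType).
Implicit Types (s t : seq (V * V)).

Lemma uedge_eq (g : V * V) x y : uedge g = uedge (x, y) -> g = (x, y) \/ g = (y, x).
Proof.
case: g => g1 g2 /setP h.
have h1 := h g1; have h2 := h g2; have hx := h x; have hy := h y.
rewrite /uedge /= !in_set2 !eqxx ?orbT /= in h1 h2 hx hy.
move: h1 => /esym /orP[] /eqP e1; move: h2 => /esym /orP[] /eqP e2; subst.
- by move: hy => /orP[] /eqP ->; left.
- by left.
- by right.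
- by move: hx => /orP[] /eqP ->; left.
Qed.

Lemma take_split (T : Type) (s1 s2 : seq T) (x : T) k : (k <= size (s1 ++ x :: s2))%N ->
  ((k <= size s1)%N /\ take k (s1 ++ x :: s2) = take k s1) \/
  exists2 m, (m <= size s2)%N & k = (size s1 + m.+1)%N /\ take k (s1 ++ x :: s2) = s1 ++ x :: take m s2.
Proof.
move=> ks; rewrite take_cat; case: (ltnP k (size s1)) => h.
  by left; split => //; apply: ltnW.
case: (eqVneq k (size s1)) => [->|ne].
  by left; rewrite subnn take0 cats0 take_size.
right; exists (k - size s1).-1.
  by move: ks; rewrite size_cat /=; lia.
have -> : (k - size s1 = (k - size s1).-1.+1)%N by lia.
by split => //; lia.
Qed.

Lemma uniq_replace (T : eqType) (l1 l2 l3 : seq T) x y z :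
  uniq (l1 ++ x :: l2 ++ y :: l3) -> z \notin l1 ++ l2 ++ l3 -> uniq (l1 ++ l2 ++ z :: l3).
Proof.
move=> u nz.
have -> : uniq (l1 ++ l2 ++ z :: l3) = uniq (z :: l1 ++ l2 ++ l3).
  by apply: perm_uniq; rewrite catA perm_catC /= perm_cons perm_catC -catA.
rewrite /= nz; apply: subseq_uniq u.
apply: cat_subseq => //; apply: (subseq_trans _ (subseq_cons _ _)).
by apply: cat_subseq => //; apply: subseq_cons.
Qed.

End Tools2.
Lemma take_cat_le (T : Type) (s1 s2 : seq T) k : (k <= size s1)%N -> take k (s1 ++ s2) = take k s1.
Proof.
move=> h; rewrite take_cat; case: ltnP => // h2.
have -> : k = size s1 by apply/eqP; rewrite eqn_leq h h2.
by rewrite subnn take0 cats0 take_size.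
Qed.

Lemma take_cat_add (T : Type) (s1 s2 : seq T) m : take (size s1 + m) (s1 ++ s2) = s1 ++ take m s2.
Proof. by rewrite takeD take_size_cat // drop_size_cat. Qed.

Lemma erel_cons_split (V : finType) (l1 l2 : seq (V * V)) e x y :
  erel (l1 ++ e :: l2) x y -> erel (l1 ++ l2) x y \/ (e = (x, y) \/ e = (y, x)).
Proof.
rewrite /erel !mem_cat !in_cons.
case: (eqVneq (x, y) e) => [<-|_]; first by right; left.
case: (eqVneq (y, x) e) => [<-|_]; first by right; right.
by rewrite /= => h; left.
Qed.

Lemma edge_seq_del (V : finType) (adj : rel V) (s1 s2 : seq (V * V)) e :
  edge_seq adj (s1 ++ e :: s2) -> edge_seq adj (s1 ++ s2).
Proof.
rewrite /edge_seq !all_cat /= => /andP[/and3P[-> _ ->] u] /=.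
apply: subseq_uniq u; rewrite !map_cat; apply: cat_subseq => //=.
exact: subseq_cons.
Qed.

Section Hat.
Variables (V : finType) (R : realType) (dhat : V -> V -> R) (r : nat)
  (p : 'I_r -> V * V) (Phi : ('I_r -> R) -> R).
Hypothesis dnn : forall u v, 0 <= dhat u v.
Hypothesis dsym : forall u v, dhat u v = dhat v u.
Hypothesis dtri : forall u v w, dhat u w <= dhat u v + dhat v w.
Hypothesis Phim : forall t t' : 'I_r -> R, (forall i, t i <= t' i) -> Phi t <= Phi t'.
Local Notation cadj := (@complete_adj V).
Implicit Types (s t : seq (V * V)).

Lemma nn_all s : nonneg dhat s.
Proof. by move=> e _; apply: dnn. Qed.

Definition sim s s' := forall i k, (k <= size s)%N ->
  connect (erel (take k s)) (p i).1 (p i).2 -> exists k', [/\ (k' <= size s')%N,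
    connect (erel (take k' s')) (p i).1 (p i).2 &
    prefix_time dhat s' k' <= prefix_time dhat s k].

Lemma reduce s s' : edge_seq cadj s' -> feasible p cadj s -> sim s s' ->
  feasible p cadj s' /\ objective p Phi dhat s' <= objective p Phi dhat s.
Proof.
move=> es [_ fs] h; split; first split => // i.
  by have [] := ct_sim (@nn_all s') (fs i) (h i).
by apply: Phim => i; have [] := ct_sim (@nn_all s') (fs i) (h i).
Qed.

Definition sumd (l : seq (V * V)) := \sum_(e <- l) dhat e.1 e.2.

Lemma sumd_cat l1 l2 : sumd (l1 ++ l2) = sumd l1 + sumd l2.
Proof. by rewrite /sumd big_cat. Qed.

Lemma sumd_cons e l : sumd (e :: l) = dhat e.1 e.2 + sumd l.
Proof. by rewrite /sumd big_cons. Qed.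

Lemma sumd_ge0 l : 0 <= sumd l.
Proof. by apply: sumr_ge0 => e _; apply: dnn. Qed.

Lemma del_sim s1 e s2 :
  (forall i m, connect (erel (s1 ++ e :: take m s2)) (p i).1 (p i).2 ->
               connect (erel (s1 ++ take m s2)) (p i).1 (p i).2) ->
  sim (s1 ++ e :: s2) (s1 ++ s2).
Proof.
move=> h i k ks ck; case: (take_split ks) => [[k1 tk] | [m m2 [ek tk]]].
  exists k; rewrite /prefix_time take_cat_le // -tk; split => //.
  by apply: leq_trans k1 _; rewrite size_cat leq_addr.
exists (size s1 + m)%N; rewrite /prefix_time take_cat_add tk.
split.
- by rewrite size_cat leq_add2l.
- by apply: h; rewrite -tk.
- rewrite -/(sumd _) -/(sumd _) !sumd_cat sumd_cons lerD2l lerDr; exact: dnn.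
Qed.

Lemma steiner_sim s1 e1 s2 e2 s3 f :
  dhat f.1 f.2 <= dhat e1.1 e1.2 + dhat e2.1 e2.2 ->
  (forall i m, connect (erel (s1 ++ e1 :: take m s2)) (p i).1 (p i).2 ->
               connect (erel (s1 ++ take m s2)) (p i).1 (p i).2) ->
  (forall i m, connect (erel (s1 ++ e1 :: s2 ++ e2 :: take m s3)) (p i).1 (p i).2 ->
               connect (erel (s1 ++ s2 ++ f :: take m s3)) (p i).1 (p i).2) ->
  sim (s1 ++ e1 :: s2 ++ e2 :: s3) (s1 ++ s2 ++ f :: s3).
Proof.
move=> tri h1 h2 i k ks ck; case: (take_split ks) => [[k1 tk] | [m m2 [ek tk]]].
  exists k; rewrite /prefix_time take_cat_le // -tk; split => //.
  by apply: leq_trans k1 _; rewrite size_cat leq_addr.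
case: (take_split m2) => [[k2 tk2] | [m' m3 [em tk2]]].
  exists (size s1 + m)%N; rewrite /prefix_time take_cat_add take_cat_le //.
  rewrite tk tk2 in ck *; split.
  - by rewrite size_cat leq_add2l size_cat (leq_trans k2) ?leq_addr.
  - exact: h1.
  - rewrite -/(sumd _) -/(sumd _) !sumd_cat sumd_cons lerD2l lerDr; exact: dnn.
exists (size s1 + (size s2 + m'.+1))%N.
rewrite /prefix_time take_cat_add take_cat_add /= tk tk2 in ck *; split.
- by rewrite !size_cat /= !leq_add2l ltnS.
- exact: h2.
- rewrite -/(sumd _) -/(sumd _) !(sumd_cat, sumd_cons); lra.
Qed.


Lemma other_spec (v : V) (e : V * V) : incid v e -> e.1 != e.2 ->
  (e = (v, other v e) \/ e = (other v e, v)) /\ other v e != v.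
Proof.
case: e => a b; rewrite /incid /other /=.
case: (eqVneq v a) => [<-|va] /= h ne.
  by split; [left | rewrite eq_sym].
by move/eqP: h => eb; subst; split; [right | ].
Qed.

Lemma flawA s1 e s2 : feasible p cadj (s1 ++ e :: s2) -> connect (erel s1) e.1 e.2 ->
  feasible p cadj (s1 ++ s2) /\
  objective p Phi dhat (s1 ++ s2) <= objective p Phi dhat (s1 ++ e :: s2).
Proof.
move=> fs c; have es := edge_seq_del fs.1; apply: reduce es fs _.
apply: del_sim => i m; apply: connect_sub.
have sub : {subset s1 <= s1 ++ take m s2} by move=> g gs; rewrite mem_cat gs.
move=> x y /erel_cons_split [h|[h|h]]; first exact: connect1.
  by apply: connect_erel_sub sub _; rewrite h in c.
by rewrite connect_symE; apply: connect_erel_sub sub _; rewrite h in c.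
Qed.

Lemma flawB s1 e s2 : feasible p cadj (s1 ++ e :: s2) ->
  (forall i, ~ on_path (s1 ++ e :: s2) (p i).1 (p i).2 e) ->
  feasible p cadj (s1 ++ s2) /\
  objective p Phi dhat (s1 ++ s2) <= objective p Phi dhat (s1 ++ e :: s2).
Proof.
move=> fs nop; have es := edge_seq_del fs.1; apply: reduce es fs _.
apply: del_sim => i m /connect_upath [q [pq lq uq]]; have pq0 := pq.
apply/connectP; exists q; last by rewrite lq.
apply: path_decomp pq => l1 x y l2 dec /erel_cons_split [//|h]; exfalso; apply: (nop i).
exists q; split => //.
  apply: sub_path pq0; apply: erel_sub => g; rewrite !mem_cat !in_cons.
  by case/orP=> [->|/orP[->|/mem_take ->]]; rewrite ?orbT.
by exists l1, l2; case: h => ->; [left|right].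
Qed.

Lemma flawC s1 e1 s2 e2 s3 v :
  feasible p cadj (s1 ++ e1 :: s2 ++ e2 :: s3) -> noA (s1 ++ e1 :: s2 ++ e2 :: s3) ->
  ~~ terminal p v -> incid v e1 -> incid v e2 -> ~~ has (incid v) (s1 ++ s2 ++ s3) ->
  exists s', [/\ feasible p cadj s',
    objective p Phi dhat s' <= objective p Phi dhat (s1 ++ e1 :: s2 ++ e2 :: s3) &
    (size s' < size (s1 ++ e1 :: s2 ++ e2 :: s3))%N].
Proof.
set s := s1 ++ e1 :: s2 ++ e2 :: s3.
move=> fs hA nt i1 i2 nh.
have /andP[alls us] := fs.1.
have e1s : e1 \in s by rewrite mem_cat in_cons eqxx orbT.
have e2s : e2 \in s by rewrite !(mem_cat, in_cons) eqxx !orbT.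
have ne1 : e1.1 != e1.2 := allP alls _ e1s.
have ne2 : e2.1 != e2.2 := allP alls _ e2s.
set u := other v e1; set w := other v e2.
have [E1 uv] := other_spec i1 ne1; have [E2 wv] := other_spec i2 ne2.
have ue1 : uedge e1 = [set v; u] by case: E1 => ->; rewrite /uedge //= setUC.
have ue2 : uedge e2 = [set v; w] by case: E2 => ->; rewrite /uedge //= setUC.
have uw : u != w.
  apply/negP => /eqP euw; move: us; rewrite /s map_cat /= map_cat cat_uniq /=.
  by case/and3P=> _ _ /andP[]; rewrite mem_cat in_cons ue1 ue2 euw eqxx orbT.
have sF := noA_forest hA.
have er : forall g x y, g \in s -> g = (x, y) \/ g = (y, x) -> erel s x y.
  by move=> g x y gs [] eg; rewrite eg in gs; rewrite /erel gs ?orbT.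
have nf : uedge (u, w) \notin [seq uedge g | g <- s1 ++ s2 ++ s3].
  apply/mapP => [[g gin /esym /uedge_eq eg]].
  have gs : g \in s.
    by move: gin; rewrite !(mem_cat, in_cons) => /orP[->|/orP[->|->]]; rewrite ?orbT.
  apply: (sF [:: u; v; w]) => //.
  rewrite /ucycle /= (er e1 u v e1s) ?(er e2 v w e2s) ?(er g w u gs) //=.
  - by rewrite !inE negb_or uv uw eq_sym wv.
  - by case: eg; [right | left].
  - by case: E1; [right | left].
have feas' : edge_seq cadj (s1 ++ s2 ++ (u, w) :: s3).
  apply/andP; split.
    apply/allP => g gin; case: (eqVneq g (u, w)) => [->//|ne].
    apply: (allP alls); move: gin; rewrite !(mem_cat, in_cons) (negbTE ne) /=.
    by move=> /orP[->|/orP[->|->]]; rewrite ?orbT.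
  move: us nf; rewrite /s !map_cat /= !map_cat => us nf.
  exact: uniq_replace us nf.
have sb : forall g, g \in s1 ++ s2 ++ s3 -> ~~ incid v g by apply/hasPn.
have sb1 : forall g, g \in s1 -> ~~ incid v g by move=> g gs; apply: sb; rewrite mem_cat gs.
have sb2 : forall g, g \in s2 -> ~~ incid v g.
  by move=> g gs; apply: sb; rewrite !mem_cat gs orbT.
have sb3 : forall g, g \in s3 -> ~~ incid v g.
  by move=> g gs; apply: sb; rewrite !mem_cat gs !orbT.
have avb : forall i, (p i).1 != v /\ (p i).2 != v.
  by move=> i; split; apply: contraNneq nt => <-; apply/existsP; exists i; rewrite eqxx ?orbT.
exists (s1 ++ s2 ++ (u, w) :: s3).
have [fs' ob] : feasible p cadj (s1 ++ s2 ++ (u, w) :: s3) /\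
    objective p Phi dhat (s1 ++ s2 ++ (u, w) :: s3) <= objective p Phi dhat s.
  apply: reduce feas' fs _; apply: steiner_sim.
  - have d1 : dhat e1.1 e1.2 = dhat u v by case: E1 => ->; rewrite //= dsym.
    have d2 : dhat e2.1 e2.2 = dhat v w by case: E2 => ->; rewrite //= dsym.
    by rewrite d1 d2; apply: dtri.
  - move=> i m; have [av bv] := avb i; apply: (bypass (v := v)) => //.
    + exact: erel_sym.
    + move=> x y xv yv; apply: (erel_drop_incid (v := v)) => // g gin gn; move: gin.
      rewrite mem_cat in_cons => /orP[gs1|/orP[/eqP->//|gt]];
        by rewrite mem_cat ?gs1 ?gt ?orbT in gn.
    + have only : forall g, g \in s1 ++ e1 :: take m s2 -> incid v g -> g = e1.
        move=> g; rewrite mem_cat in_cons => /orP[gs1|/orP[/eqP //|/mem_take gt]].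
          by rewrite (negbTE (sb1 _ gs1)).
        by rewrite (negbTE (sb2 _ gt)).
      move=> y y' /nbr_in[g gin [ig ->]] /nbr_in[g' gin' [ig' ->]].
      by rewrite (only _ gin ig) (only _ gin' ig'); apply: connect0.
  - move=> i m; have [av bv] := avb i; apply: (bypass (v := v)) => //.
    + exact: erel_sym.
    + move=> x y xv yv; apply: (erel_drop_incid (v := v)) => // g gin gn; move: gin.
      rewrite !(mem_cat, in_cons) => /orP[gs1|/orP[/eqP->//|/orP[gs2|/orP[/eqP->//|gt]]]];
        by rewrite !(mem_cat, in_cons) ?gs1 ?gs2 ?gt ?orbT in gn.
    + have only : forall g, g \in s1 ++ e1 :: s2 ++ e2 :: take m s3 -> incid v g ->
          other v g = u \/ other v g = w.
        move=> g; rewrite !(mem_cat, in_cons).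
        case/orP=> [gs1|/orP[/eqP-> _|/orP[gs2|/orP[/eqP-> _|/mem_take gt]]]].
        * by rewrite (negbTE (sb1 _ gs1)).
        * by left.
        * by rewrite (negbTE (sb2 _ gs2)).
        * by right.
        * by rewrite (negbTE (sb3 _ gt)).
      have cuw : connect (erel (s1 ++ s2 ++ (u, w) :: take m s3)) u w.
        by apply: connect1; rewrite /erel !(mem_cat, in_cons) eqxx !orbT.
      move=> y y' /nbr_in[g gin [ig ->]] /nbr_in[g' gin' [ig' ->]].
      case: (only _ gin ig) => ->; case: (only _ gin' ig') => ->; rewrite ?connect0 //.
      by rewrite connect_symE.
split; [exact: fs' | exact: ob | ].
by rewrite /s !size_cat /= size_cat /= [X in (_ < X)%N]addnS ltnS.
Qed.

End Hat.
Section Comb.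
Variables (V : finType).
Implicit Types (s t : seq (V * V)).

Lemma count_split (T : Type) (P : pred T) (l : seq T) n : count P l = n.+1 ->
  exists (l1 : seq T) (e : T) (l2 : seq T), [/\ l = l1 ++ e :: l2, P e, ~~ has P l1 & count P l2 = n].
Proof.
elim: l => [|x l IH] //=; case: (boolP (P x)) => px /=.
  by rewrite add1n => -[cs]; exists [::], x, l.
rewrite add0n => /IH [l1 [e [l2 [-> pe hs cs]]]].
by exists (x :: l1), e, l2; rewrite /= (negbTE px).
Qed.

Lemma deg2_split s v : deg s v = 2 ->
  exists s1 e1 s2 e2 s3, [/\ s = s1 ++ e1 :: s2 ++ e2 :: s3, incid v e1, incid v e2 &
    ~~ has (incid v) (s1 ++ s2 ++ s3)].
Proof.
move=> /count_split [s1 [e1 [t [-> i1 h1 /count_split [s2 [e2 [s3 [-> i2 h2 c3]]]]]]]].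
exists s1, e1, s2, e2, s3; split => //.
by rewrite !has_cat negb_or h1 negb_or h2 has_count c3.
Qed.

Lemma around (a v : V) q l1 z1 z2 l2 : a :: q = l1 ++ z1 :: z2 :: l2 -> (v = z1 \/ v = z2) ->
  v != a -> v != last a q -> exists l1' x y l2', a :: q = l1' ++ x :: v :: y :: l2'.
Proof.
move=> dec [] ev va vl; subst v.
  case/lastP: l1 dec => [|l1' x] dec; first by case: dec => ea _; rewrite ea eqxx in va.
  by exists l1', x, z2, l2; rewrite dec cat_rcons.
case: l2 dec => [|y l2'] dec.
  move: vl; rewrite -[last a q]/(last a (a :: q)) dec last_cat /=.
  by rewrite eqxx.
by exists l1, z1, y, l2'.
Qed.

Lemma deg_ge2 r (p : 'I_r -> V * V) s v :
  (forall e, e \in s -> exists i, on_path s (p i).1 (p i).2 e) -> uniq s ->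
  ~~ terminal p v -> touched s v -> (2 <= deg s v)%N.
Proof.
move=> cov us nt /hasP[g gs ig].
have [i [q [pq lq uq [l1 [l2 dec]]]]] := cov g gs.
have av : v != (p i).1 by apply: contraNneq nt => ->; apply/existsP; exists i; rewrite eqxx.
have bv : v != last (p i).1 q.
  by rewrite lq; apply: contraNneq nt => ->; apply/existsP; exists i; rewrite eqxx orbT.
have ev : v = g.1 \/ v = g.2 by case/orP: ig => /eqP e; [left|right].
have [l1' [x [y [l2' dec']]]] : exists l1' x y l2', (p i).1 :: q = l1' ++ x :: v :: y :: l2'.
  case: dec => dec.
    by apply: (around dec ev).
  by apply: (around dec _ av bv); case: ev => e; [right|left].
have exv : erel s x v by apply: (path_pair pq dec').
have evy : erel s v y by apply: (path_pair pq (l1 := rcons l1' x) (l2 := l2')); rewrite cat_rcons; exact: dec'.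
have xy : x != y.
  by move: uq; rewrite dec' cat_uniq /= => /and3P[_ _ /andP[]]; rewrite !inE !negb_or => /and3P[_ xy' _] _.
rewrite erel_sym in exv.
have [g1 g1s [i1 ey]] := nbr_in evy.
have [g2 g2s [i2 ex]] := nbr_in exv.
have g12 : g1 != g2 by apply: contraNneq xy => e; rewrite ex ey e.
rewrite /deg -size_filter.
have -> : 2%N = size [:: g1; g2] by [].
apply: uniq_leq_size; first by rewrite /= inE g12.
by move=> h; rewrite !inE => /orP[] /eqP ->; rewrite mem_filter ?i1 ?i2 ?g1s ?g2s.
Qed.

Lemma erel_avoid s g z x y : (z = g.1 \/ z = g.2) -> x != z -> y != z -> erel s x y ->
  erel [seq f <- s | uedge f != uedge g] x y.
Proof.
move=> hz xz yz.
have ne : forall a b, a != z -> b != z -> uedge (a, b) != uedge g.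
  move=> a b az bz; apply/negP => /eqP e.
  have : z \in uedge g by rewrite /uedge !inE; case: hz => ->; rewrite eqxx ?orbT.
  by rewrite -e /uedge !inE /= => /orP[] /eqP ez; [rewrite ez eqxx in az | rewrite ez eqxx in bz].
rewrite /erel !mem_filter => /orP[h|h]; apply/orP; [left|right]; rewrite h andbT; exact: ne.
Qed.

Lemma seg_left (R R' : rel V) a q l1 z1 z2 l2 : path R a q -> a :: q = l1 ++ z1 :: z2 :: l2 ->
  uniq (a :: q) -> (forall x y, x != z2 -> y != z2 -> R x y -> R' x y) -> connect R' a z1.
Proof.
move=> pq dec uq h; case: l1 dec => [|a' l1] /= dec.
  by case: dec => -> _; apply: connect0.
case: dec => ea eq; subst a'.
have hz : z2 \notin a :: rcons l1 z1.
  have e2 : a :: q = (a :: rcons l1 z1) ++ z2 :: l2 by rewrite eq /= -cats1 -catA.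
  move: uq; rewrite e2 cat_uniq => /and3P[_ /hasPn hn _].
  by apply: hn; rewrite mem_head.
apply/connectP; exists (rcons l1 z1); last by rewrite last_rcons.
move: pq; rewrite eq cat_path /= => /and3P[p1 r1 _].
apply: (sub_in_path (P := predC1 z2)).
- by move=> x y; rewrite !inE; apply: h.
- apply/allP => x xin /=; apply/eqP => e; subst x.
  by rewrite xin in hz.
- by rewrite rcons_path p1 r1.
Qed.

Lemma seg_right (R R' : rel V) a q l1 z1 z2 l2 : path R a q -> a :: q = l1 ++ z1 :: z2 :: l2 ->
  uniq (a :: q) -> (forall x y, x != z1 -> y != z1 -> R x y -> R' x y) -> connect R' z2 (last a q).
Proof.
move=> pq dec uq h.
have p2 : path R z2 l2.
  have : path R a q by [].
  rewrite -[path R a q]/(path R a (behead (a :: q))).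
  case: l1 dec => [|a' l1] /= dec.
    by case: dec => _ -> /= /andP[].
  by case: dec => _ ->; rewrite cat_path /= => /and4P[].
have lq : last a q = last z2 l2.
  by rewrite -[last a q]/(last a (a :: q)) dec last_cat /=.
apply/connectP; exists l2; last by rewrite lq.
have hz : z1 \notin z2 :: l2 by move: uq; rewrite dec cat_uniq /= => /and3P[_ _ /andP[]].
apply: (sub_in_path (P := predC1 z1)).
- by move=> x y; rewrite !inE; apply: h.
- apply/allP => x xin /=; apply/eqP => e; subst x.
  by rewrite xin in hz.
- exact: p2.
Qed.

End Comb.
Section Hat2.
Variables (V : finType) (R : realType) (dhat : V -> V -> R) (r : nat)
  (p : 'I_r -> V * V) (Phi : ('I_r -> R) -> R).
Hypothesis dnn : forall u v, 0 <= dhat u v.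
Hypothesis Phim : forall t t' : 'I_r -> R, (forall i, t i <= t' i) -> Phi t <= Phi t'.
Local Notation cadj := (@complete_adj V).
Implicit Types (s t : seq (V * V)).

Lemma erel_of s g x y : g \in s -> g = (x, y) \/ g = (y, x) -> erel s x y.
Proof. by move=> gs [] e; rewrite e in gs; rewrite /erel gs ?orbT. Qed.

Lemma ctrans (e : rel V) x y z : connect e x y -> connect e y z -> connect e x z.
Proof. exact: connect_trans. Qed.

Lemma nn_all2 s : nonneg dhat s.
Proof. by move=> e _; apply: dnn. Qed.

Lemma perm_feasible s t : feasible p cadj s -> perm_eq t s -> feasible p cadj t.
Proof.
move=> [/andP[al us] cs] pts; split.
  rewrite /edge_seq (perm_all _ pts) al /=.
  by rewrite (perm_uniq (perm_map _ pts)).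
move=> i; apply: connect_erel_sub (cs i) => x; by rewrite (perm_mem pts).
Qed.

Lemma fct_ge s t a b : a != b -> connect (erel s) a b -> perm_eq t s ->
  conn_time dhat t a b <= forest_conn_time dhat s t a b.
Proof.
move=> ab cs pts.
have mts : t =i s := perm_mem pts.
have [q [pq lq uq]] := connect_upath cs.
pose P := fun i : 'I_(size t) => `[< on_path s a b (nth (a, a) t i) >].
have key : forall x y, (exists l1 l2, a :: q = l1 ++ x :: y :: l2) -> erel s x y ->
    exists j : 'I_(size t), P j /\ (nth (a, a) t j = (x, y) \/ nth (a, a) t j = (y, x)).
  move=> x y [l1 [l2 dec]] exy.
  have [g gs hg] : exists2 g, g \in s & (g = (x, y) \/ g = (y, x)).
    by case/orP: exy => h; [exists (x, y) => //; left | exists (y, x) => //; right].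
  have gt : g \in t by rewrite mts.
  have jlt : (index g t < size t)%N by rewrite index_mem.
  have nj : nth (a, a) t (index g t) = g := nth_index _ gt.
  exists (Ordinal jlt); rewrite /P /= nj; split => //.
  apply/asboolP; exists q; split => //; exists l1, l2.
  by case: hg => ->; [left | right].
pose K := (\max_(i | P i) i.+1)%N.
have Ksz : (K <= size t)%N by apply/bigmax_leqP => i _; exact: ltn_ord i.
have cK : connect (erel (take K t)) a b.
  apply/connectP; exists q; last by rewrite lq.
  apply: path_decomp pq => l1 x y l2 dec exy.
  have [j [Pj hj]] := key x y (ex_intro _ l1 (ex_intro _ l2 dec)) exy.
  have jK : (j < K)%N := leq_bigmax_cond (F := fun i : 'I_(size t) => i.+1) _ Pj.
  have gK : nth (a, a) t j \in take K t.
    rewrite -(nth_take _ jK); apply: mem_nth; rewrite size_takel; [exact: jK | exact: Ksz].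
  exact: erel_of gK hj.
have ct := ct_le (@nn_all2 t) Ksz cK.
apply: le_trans ct _.
case: q pq lq uq key {cK} => [|y q] pq lq uq key.
  by move: lq => /= lq; rewrite lq eqxx in ab.
have ay : erel s a y by case/andP: pq.
have [j1 [Pj1 _]] := key a y (ex_intro _ [::] (ex_intro _ q erefl)) ay.
pose im := [arg max_(i > j1 | P i) (i : nat)].
have [Pim maxim] : P im /\ forall i, P i -> (i <= im)%N.
  by rewrite /im; case: arg_maxnP => // m Pm hm; split.
have Kim : (K <= im.+1)%N by apply/bigmax_leqP => i Pi; rewrite ltnS; apply: maxim.
apply: le_trans (pt_mono (@nn_all2 t) Kim) _.
exact: (le_bigmax_cond 0 (fun i : 'I_(size t) => prefix_time dhat t i.+1) Pim).
Qed.

Lemma fct_le s a b : is_forest s -> uniq [seq uedge e | e <- s] ->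
  (forall e, e \in s -> e.1 != e.2) -> connect (erel s) a b ->
  forest_conn_time dhat s s a b <= conn_time dhat s a b.
Proof.
move=> fF us ne cs.
have [ck1 ck2] := ck_spec cs.
rewrite ct_def; apply: bigmax_le => [|i].
  by apply: sumr_ge0 => e _; apply: dnn.
move=> /asboolP [q [pq lq uq [l1 [l2 dec]]]].
set g := nth (a, a) s i.
apply: pt_mono (@nn_all2 _) _; rewrite leqNgt; apply/negP => hk.
have gs : g \in s := mem_nth _ (ltn_ord i).
have ki : (ck s a b <= i)%N by rewrite -ltnS.
have gd : g \in drop (ck s a b) s.
  have -> : g = nth (a, a) (drop (ck s a b) s) (i - ck s a b) by rewrite nth_drop subnKC.
  apply: mem_nth; rewrite size_drop ltn_sub2r //.
  exact: leq_ltn_trans ki (ltn_ord i).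
set F' := [seq f <- s | uedge f != uedge g].
have sub : {subset take (ck s a b) s <= F'}.
  move=> x xt; rewrite mem_filter (mem_take xt) andbT.
  move: us; rewrite -[s in map _ s](cat_take_drop (ck s a b)) map_cat cat_uniq.
  case/and3P=> _ /hasPn hn _.
  have := hn (uedge g) (map_f _ gd) => /= hx.
  by apply: contraNneq hx => <-; apply: map_f.
have cF : connect (erel F') a b := connect_erel_sub sub ck2.
have av1 : forall x y, x != g.1 -> y != g.1 -> erel s x y -> erel F' x y.
  by move=> x y; apply: erel_avoid; left.
have av2 : forall x y, x != g.2 -> y != g.2 -> erel s x y -> erel F' x y.
  by move=> x y; apply: erel_avoid; right.
have c12 : connect (erel F') g.1 g.2.
  case: dec => dec.
    have c1 := seg_left pq dec uq av2.
    have c2 := seg_right pq dec uq av1.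
    rewrite lq connect_symE in c2; rewrite connect_symE in c1.
    exact: ctrans (ctrans c1 cF) c2.
  have c1 := seg_left pq dec uq av1.
  have c2 := seg_right pq dec uq av2.
  rewrite lq in c2; rewrite connect_symE in cF.
  exact: ctrans (ctrans c2 cF) c1.
exact: forest_cut fF gs (ne _ gs) c12.
Qed.

End Hat2.
Fixpoint seqs (T : Type) (l : seq T) n : seq (seq T) :=
  if n is n'.+1 then [::] :: [seq x :: u | x <- l, u <- seqs l n'] else [:: [::]].

Lemma mem_seqs (T : eqType) (l : seq T) n u : (size u <= n)%N -> all (mem l) u -> u \in seqs l n.
Proof.
elim: n u => [|n IH] [|x u] //= su /andP[xl al].
rewrite in_cons; apply/orP; right; apply: (allpairs_f (fun x u => x :: u)) => //.
exact: IH.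
Qed.

Lemma list_min (R : realType) (T : eqType) (l : seq T) (P : T -> Prop) (f : T -> R) :
  (exists2 x, x \in l & P x) ->
  exists x, [/\ x \in l, P x & forall y, y \in l -> P y -> f x <= f y].
Proof.
elim: l => [|a l IH] [x]; first by [].
case: (pselect (exists2 x, x \in l & P x)) => [h|h] xin Px.
  have [m [ml Pm mm]] := IH h.
  case: (pselect (P a)) => Pa.
    case: (lerP (f a) (f m)) => fam.
      exists a; split; [exact: mem_head | by [] | ].
      move=> y; rewrite in_cons => /orP[/eqP -> //|yl Py].
      exact: le_trans fam (mm _ yl Py).
    exists m; split => //; first by rewrite in_cons ml orbT.
    move=> y; rewrite in_cons => /orP[/eqP -> _|yl Py]; last exact: mm.
    exact: ltW.
  exists m; split => //; first by rewrite in_cons ml orbT.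
  by move=> y; rewrite in_cons => /orP[/eqP -> //|yl Py]; apply: mm.
have xa : x = a.
  move: xin; rewrite in_cons => /orP[/eqP //|xl]; by case: h; exists x.
subst x; exists a; split; [exact: mem_head | by [] | ].
move=> y; rewrite in_cons => /orP[/eqP -> //|yl Py]; by case: h; exists y.
Qed.

Section Main.
Variables (V : finType) (R : realType) (dhat : V -> V -> R) (r : nat)
  (p : 'I_r -> V * V) (Phi : ('I_r -> R) -> R).
Hypothesis dnn : forall u v, 0 <= dhat u v.
Hypothesis dsym : forall u v, dhat u v = dhat v u.
Hypothesis dtri : forall u v w, dhat u w <= dhat u v + dhat v w.
Hypothesis Phim : forall t t' : 'I_r -> R, (forall i, t i <= t' i) -> Phi t <= Phi t'.
Hypothesis pne : forall i, (p i).1 != (p i).2.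
Hypothesis puniq : forall i j, uedge (p i) = uedge (p j) -> i = j.
Hypothesis r2 : (2 <= r)%N.
Local Notation cadj := (@complete_adj V).
Implicit Types (s t : seq (V * V)).

Lemma feasible_size s : feasible p cadj s -> (size s <= #|{set V}|)%N.
Proof.
move=> [/andP[_ us] _].
by rewrite -(size_map (@uedge V)) -(card_uniqP us) max_card.
Qed.

Lemma exists_opt : exists s0, feasible p cadj s0 /\
  forall t, feasible p cadj t -> objective p Phi dhat s0 <= objective p Phi dhat t.
Proof.
set l := seqs (enum [set: V * V]) #|{set V}|.
have inl : forall t, feasible p cadj t -> t \in l.
  move=> t ft; apply: mem_seqs; first exact: feasible_size.
  by apply/allP => x _; have := mem_enum [set: V * V] x; rewrite in_setT.
have f0 : feasible p cadj [seq p i | i <- enum 'I_r].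
  split.
    apply/andP; split; first by apply/allP => e /mapP[i _ ->]; exact: pne.
    rewrite -map_comp map_inj_in_uniq ?enum_uniq //.
    by move=> i j _ _ /= /puniq.
  move=> i; apply: connect1; rewrite /erel -surjective_pairing.
  by rewrite map_f ?mem_enum.
have ex : exists2 x, x \in l & feasible p cadj x.
  by exists [seq p i | i <- enum 'I_r]; [exact: inl | exact: f0].
have [s0 [_ fs0 m0]] := list_min (objective p Phi dhat) ex.
exists s0; split => // t ft; exact: m0 _ (inl _ ft) ft.
Qed.

Definition Good s := [/\ noA s, (forall e, e \in s -> exists i, on_path s (p i).1 (p i).2 e) &
  (forall v, ~~ terminal p v -> deg s v != 2)].

Lemma good_exists z : (forall t, feasible p cadj t -> z <= objective p Phi dhat t) ->
  forall s, feasible p cadj s -> objective p Phi dhat s = z ->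
  exists s', [/\ feasible p cadj s', objective p Phi dhat s' = z & Good s'].
Proof.
move=> hz.
suff H : forall n s, (size s < n)%N -> feasible p cadj s -> objective p Phi dhat s = z ->
    exists s', [/\ feasible p cadj s', objective p Phi dhat s' = z & Good s'].
  by move=> s; apply: (H (size s).+1).
elim=> [//|n IH] s ss fs os.
have step : forall s', feasible p cadj s' -> objective p Phi dhat s' <= objective p Phi dhat s ->
    (size s' < size s)%N ->
    exists s'', [/\ feasible p cadj s'', objective p Phi dhat s'' = z & Good s''].
  move=> s' fs' ob sz; apply: (IH s') => //.
    by apply: leq_trans sz _; rewrite -ltnS.
  by apply/le_anti/andP; split; [rewrite -os | exact: hz].
case: (pselect (exists s1 e s2, s = s1 ++ e :: s2 /\ connect (erel s1) e.1 e.2)) =>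
    [[s1 [e [s2 [es c]]]]|nA].
  subst s; have [fs' ob] := flawA dnn Phim fs c.
  by apply: step fs' ob _; rewrite !size_cat /= addnS ltnS.
have hA : noA s.
  by move=> s1 e s2 es; apply/negP => c; apply: nA; exists s1, e, s2.
case: (pselect (exists s1 e s2, s = s1 ++ e :: s2 /\
    forall i, ~ on_path s (p i).1 (p i).2 e)) => [[s1 [e [s2 [es c]]]]|nB].
  subst s; have [fs' ob] := flawB dnn Phim fs c.
  by apply: step fs' ob _; rewrite !size_cat /= addnS ltnS.
have cov : forall e, e \in s -> exists i, on_path s (p i).1 (p i).2 e.
  move=> e es; case: (pselect (exists i, on_path s (p i).1 (p i).2 e)) => // hn.
  exfalso; apply: nB; case/splitPr: es hn => s1 s2 hn.
  by exists s1, e, s2; split => // i hi; apply: hn; exists i.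
case: (pselect (exists v, ~~ terminal p v /\ deg s v = 2)) => [[v [nt dv]]|nC].
  have [s1 [e1 [s2 [e2 [s3 [es i1 i2 nh]]]]]] := deg2_split dv.
  subst s; have [s' [fs' ob sz]] := flawC dnn dsym dtri Phim fs hA nt i1 i2 nh.
  exact: step fs' ob sz.
exists s; split => //; split => // v nt; apply/eqP => dv; apply: nC; by exists v.
Qed.

Lemma conn_nil (a b : V) : connect (erel ([::] : seq (V * V))) a b -> a = b.
Proof. by case/connectP => [[|y q]] //= ->. Qed.

Lemma hat_main : exists z s, [/\ feasible p cadj s, objective p Phi dhat s = z,
  (forall t, feasible p cadj t -> z <= objective p Phi dhat t), r_forest p cadj s &
  forest_value p Phi dhat s z /\ (#|nonterminals p s| <= 2 * r - 2)%N].
Proof.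
have [s0 [fs0 m0]] := exists_opt.
set z := objective p Phi dhat s0.
have [s [fs os [hA cov d2]]] := good_exists m0 fs0 erefl.
exists z, s.
have [/andP[alls us] cs] := fs.
have ne : forall e, e \in s -> e.1 != e.2 := fun e h => allP alls e h.
have fF := noA_forest hA.
have r0 : (0 < r)%N by apply: leq_trans r2.
split => //.
- by split => //; apply/andP.
split.
  split.
    exists s; split; first exact: perm_refl.
    rewrite /z -os; apply/le_anti/andP; split; apply: Phim => i /=.
      exact: (fct_le dnn (a := (p i).1) (b := (p i).2) fF us ne (cs i)).
    exact: (fct_ge dnn (s := s) (t := s) (pne i) (cs i) (perm_refl s)).
  move=> t pts; have ft := perm_feasible fs pts.
  apply: le_trans (m0 _ ft) _; apply: Phim => i /=.
  exact: (fct_ge dnn (s := s) (t := t) (pne i) (cs i) pts).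
have sn : s != [::].
    apply/eqP => s0n; have := cs (Ordinal r0); rewrite s0n => /conn_nil e.
    by move: (pne (Ordinal r0)); rewrite e eqxx.
  apply: (nonterm_bound (p (Ordinal r0)) hA sn ne) => v; rewrite inE => /andP[tv nt].
  have := deg_ge2 cov (map_uniq us) nt tv.
  by rewrite leq_eqVlt eq_sym (negbTE (d2 v nt)).
Qed.

End Main.
Section Walks.
Variables (V : finType) (R : realType) (adj : rel V) (c : V -> V -> R).
Hypothesis adjsym : symmetric adj.
Hypothesis cpos : forall u v, adj u v -> c u v = c v u /\ 0 < c u v.
Implicit Types (s t l : seq (V * V)).

Lemma walk_len_ge0 x q : path adj x q -> 0 <= walk_len c x q.
Proof.
elim: q x => [|y q IH] x //= /andP[xy pq].
by apply: addr_ge0; [exact: ltW (cpos xy).2 | exact: IH].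
Qed.

Lemma walk_len_cat x q1 q2 : walk_len c x (q1 ++ q2) = walk_len c x q1 + walk_len c (last x q1) q2.
Proof. by elim: q1 x => [|y q1 IH] x /=; rewrite ?add0r // IH addrA. Qed.

Lemma rev_walk q x : path adj x q -> exists q', [/\ path adj (last x q) q',
  last (last x q) q' = x & walk_len c (last x q) q' = walk_len c x q].
Proof.
elim: q x => [|y q IH] x /=; first by exists [::].
case/andP=> xy pq; have [q' [pq' lq' wq']] := IH y pq.
exists (rcons q' x); split.
- by rewrite rcons_path pq' lq' adjsym.
- by rewrite last_rcons.
- rewrite -cats1 walk_len_cat lq' /= wq' addr0 addrC; congr (_ + _).
  by rewrite (cpos xy).1.
Qed.

Fixpoint wedges (x : V) (q : seq V) : seq (V * V) :=
  if q is y :: q' then (x, y) :: wedges y q' else [::].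

Lemma wedges_sum x q : \sum_(e <- wedges x q) c e.1 e.2 = walk_len c x q.
Proof. by elim: q x => [|y q IH] x /=; rewrite ?big_nil // big_cons IH. Qed.

Lemma wedges_adj x q : path adj x q -> forall e, e \in wedges x q -> adj e.1 e.2.
Proof.
elim: q x => [|y q IH] x //= /andP[xy pq] e; rewrite in_cons => /orP[/eqP -> //|].
exact: IH.
Qed.

Lemma wedges_conn x q : connect (erel (wedges x q)) x (last x q).
Proof.
elim: q x => [|y q IH] x /=; first exact: connect0.
apply: (@connect_trans _ _ y).
  by apply: connect1; rewrite /erel mem_head.
by apply: connect_erel_sub (IH y) => g gin; rewrite in_cons gin orbT.
Qed.

Definition canon (e : V * V) := if (rk e.1 <= rk e.2)%N then e else (e.2, e.1).
Definition dd l := rev (undup (rev (map canon l))).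

Lemma mem_dd l x : (x \in dd l) = (x \in map canon l).
Proof. by rewrite mem_rev mem_undup mem_rev. Qed.

Lemma uniq_dd l : uniq (dd l).
Proof. by rewrite rev_uniq undup_uniq. Qed.

Lemma dd_cat l1 l2 : exists l3, dd (l1 ++ l2) = dd l1 ++ l3.
Proof. by rewrite /dd map_cat rev_cat undup_cat rev_cat; eexists. Qed.

Lemma canon_or e : canon e = e \/ canon e = (e.2, e.1).
Proof. by rewrite /canon; case: ifP; [left | right]. Qed.

Lemma canon_swap e : canon (e.2, e.1) = canon e.
Proof.
case: e => a b; rewrite /canon /=.
case: (leqP (rk b) (rk a)) => h1; case: (leqP (rk a) (rk b)) => h2 //.
have e : rk a = rk b by apply/eqP; rewrite eqn_leq h1 h2.
by rewrite (rk_inj e).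
by move: (ltn_trans h1 h2); rewrite ltnn.
Qed.

Lemma erel_dd l x y : erel l x y -> erel (dd l) x y.
Proof.
have h : forall g, g \in l -> erel (dd l) g.1 g.2.
  move=> g gl; apply: (erel_of (g := canon g)); first by rewrite mem_dd map_f.
  by case: (canon_or g) => ->; [left; case: g {gl} | right].
rewrite /erel => /orP[/h //|/h]; by rewrite erel_sym.
Qed.

Lemma uedge_dd l : uniq [seq uedge e | e <- dd l].
Proof.
rewrite map_inj_in_uniq ?uniq_dd // => x y; rewrite !mem_dd.
move=> /mapP[g _ ->] /mapP[g' _ ->].
have ue : forall e, uedge (canon e) = uedge e.
  by move=> e; case: (canon_or e) => ->; rewrite // -uedge_sym; case: e.
rewrite !ue => /esym; case: g => a b /uedge_eq [->|->] //.
by rewrite -(canon_swap (a, b)).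
Qed.

Lemma sum_undup (f : V * V -> R) l : (forall e, e \in l -> 0 <= f e) ->
  \sum_(e <- undup l) f e <= \sum_(e <- l) f e.
Proof.
elim: l => [|x l IH] h //=.
have IH' := IH (fun e el => h e (mem_behead (s := x :: l) el)).
case: ifP => _; rewrite big_cons.
  by apply: le_trans IH' _; rewrite lerDr; apply: h; rewrite mem_head.
by rewrite big_cons lerD2l.
Qed.

Lemma sum_dd l : (forall e, e \in l -> adj e.1 e.2) ->
  \sum_(e <- dd l) c e.1 e.2 <= \sum_(e <- l) c e.1 e.2.
Proof.
move=> al.
have pe : perm_eq (dd l) (undup (map canon l)).
  by apply: uniq_perm; rewrite ?uniq_dd ?undup_uniq // => x; rewrite mem_dd mem_undup.
rewrite (perm_big _ pe).
apply: le_trans (sum_undup _) _.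
  move=> e /mapP[g gl ->]; case: (canon_or g) => ->; have := cpos (al _ gl).
    by case=> _ /ltW.
  by case=> -> /ltW.
rewrite big_map le_eqVlt; apply/orP; left; apply/eqP; rewrite big_seq [RHS]big_seq.
apply: eq_bigr => g gl; case: (canon_or g) => -> //=.
by rewrite (cpos (al _ gl)).1.
Qed.

End Walks.
Section GP.
Variables (V : finType) (R : realType) (adj : rel V) (c : V -> V -> R)
  (r : nat) (p : 'I_r -> V * V) (Phi : ('I_r -> R) -> R) (dhat : V -> V -> R).
Hypothesis adjsym : symmetric adj.
Hypothesis adjirr : irreflexive adj.
Hypothesis cpos : forall u v, adj u v -> c u v = c v u /\ 0 < c u v.
Hypothesis Phim : forall t t' : 'I_r -> R, (forall i, t i <= t' i) -> Phi t <= Phi t'.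
Hypothesis sd : is_shortest_dist adj c dhat.
Local Notation cadj := (@complete_adj V).
Implicit Types (s t l : seq (V * V)).

Lemma d_nn u v : 0 <= dhat u v.
Proof. have [[q [pq lq wq]] _] := sd u v; rewrite -wq. have h := walk_len_ge0 cpos pq. exact: h. Qed.

Lemma d_le u v : adj u v -> dhat u v <= c u v.
Proof.
move=> uv; have [_ h] := sd u v.
by have := h [:: v]; rewrite /= uv addr0; apply.
Qed.

Lemma d_sym_le u v : dhat v u <= dhat u v.
Proof.
have [[q [pq lq wq]] _] := sd u v.
have [q' [pq' lq' wq']] := rev_walk (c := c) adjsym cpos pq.
rewrite lq in pq' lq' wq'; have [_ h] := sd v u.
by rewrite -wq -wq'; apply: h.
Qed.

Lemma d_sym u v : dhat u v = dhat v u.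
Proof. by apply/le_anti/andP; split; apply: d_sym_le. Qed.

Lemma d_tri u v w : dhat u w <= dhat u v + dhat v w.
Proof.
have [[q1 [p1 l1 w1]] _] := sd u v.
have [[q2 [p2 l2 w2]] _] := sd v w.
have [_ h] := sd u w.
rewrite -w1 -w2 -l1 -walk_len_cat; apply: h.
  by rewrite cat_path p1 l1 p2.
by rewrite last_cat l1.
Qed.

Lemma G_to_hat s : feasible p adj s ->
  feasible p cadj s /\ objective p Phi dhat s <= objective p Phi c s.
Proof.
move=> [/andP[al us] cs]; split.
  split => //; apply/andP; split => //; apply/allP => e es.
  by have := allP al e es; rewrite /complete_adj; apply: contraTneq => ->; rewrite adjirr.
apply: Phim => i /=; rewrite !ct_def /prefix_time big_seq [X in _ <= X]big_seq.
by apply: ler_sum => e /mem_take es; apply: d_le; exact: allP al e es.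
Qed.

Lemma hat_to_G s : feasible p cadj s ->
  exists s', feasible p adj s' /\ objective p Phi c s' <= objective p Phi dhat s.
Proof.
move=> [_ cs].
pose wk u v := sval (cid (proj1 (sd u v))).
have wkP : forall u v, [/\ path adj u (wk u v), last u (wk u v) = v &
    walk_len c u (wk u v) = dhat u v] by move=> u v; exact: svalP (cid (proj1 (sd u v))).
pose W l := flatten [seq wedges e.1 (wk e.1 e.2) | e <- l].
have Wadj : forall l g, g \in W l -> adj g.1 g.2.
  move=> l g /flattenP[w /mapP[e _ ->] gw].
  by have [pw _ _] := wkP e.1 e.2; have h := wedges_adj pw gw.
have Wcat : forall l1 l2, W (l1 ++ l2) = W l1 ++ W l2 by move=> l1 l2; rewrite /W map_cat flatten_cat.
have Wsum : forall l, \sum_(g <- W l) c g.1 g.2 = \sum_(e <- l) dhat e.1 e.2.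
  move=> l; rewrite big_flatten big_map; apply: eq_bigr => e _.
  by rewrite wedges_sum; have [_ _ ->] := wkP e.1 e.2.
have Wconn : forall l e, e \in l -> connect (erel (W l)) e.1 e.2.
  move=> l e el; have [_ le _] := wkP e.1 e.2.
  have := wedges_conn e.1 (wk e.1 e.2); rewrite le.
  apply: connect_erel_sub => g gw; apply/flattenP.
  by exists (wedges e.1 (wk e.1 e.2)) => //; apply: (map_f (fun e => wedges e.1 (wk e.1 e.2))).
set s' := dd (W s).
have adjs' : forall g, g \in s' -> adj g.1 g.2.
  move=> g; rewrite mem_dd => /mapP[g' /Wadj a' ->].
  by case: (canon_or g') => -> //=; rewrite adjsym.
have nns' : nonneg c s' by move=> g /adjs' /cpos [_ /ltW].
have key : forall i, connect (erel s') (p i).1 (p i).2 /\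
    conn_time c s' (p i).1 (p i).2 <= conn_time dhat s (p i).1 (p i).2.
  move=> i; apply: (ct_sim nns' (cs i)) => k ks ck.
  have [l3 e3] := dd_cat (W (take k s)) (W (drop k s)).
  have sdef : s' = dd (W (take k s)) ++ l3 by rewrite /s' -e3 -Wcat cat_take_drop.
  exists (size (dd (W (take k s)))); split.
  - by rewrite sdef size_cat leq_addr.
  - rewrite sdef take_size_cat //.
    apply: connect_sub ck => x y exy.
    apply: connect_mono (@erel_dd _ _) _ _ _.
    case/orP: exy => h; first exact: Wconn h.
    by rewrite connect_symE; exact: Wconn h.
  - rewrite /prefix_time sdef take_size_cat // -Wsum.
    by have h := sum_dd cpos (l := W (take k s)) (fun g gin => Wadj _ g gin).
exists s'; split.
  split; last by move=> i; case: (key i).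
  apply/andP; split; first by apply/allP => g /adjs'.
  exact: uedge_dd.
by apply: Phim => i; case: (key i).
Qed.

End GP.

Theorem corollary2 (V : finType) (R : realType)
    (adj : rel V) (c : V -> V -> R)
    (r : nat) (p : 'I_r -> V * V) (Phi : ('I_r -> R) -> R)
    (dhat : V -> V -> R) :
  (* G: simple undirected connected network with positive edge lengths *)
  symmetric adj -> irreflexive adj ->
  (forall u v, connect adj u v) ->
  (forall u v, adj u v -> c u v = c v u /\ 0 < c u v) ->
  (* r >= 2 r-pairs, forming a set of pairs of distinct vertices *)
  (2 <= r)%N ->
  (forall i, (p i).1 != (p i).2) ->
  (forall i j, uedge (p i) = uedge (p j) -> i = j) ->
  (* Phi is non-decreasing in the connection times *)
  (forall t t' : 'I_r -> R, (forall i, t i <= t' i) -> Phi t <= Phi t') ->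
  (* dhat: edge lengths of the metric closure = shortest-path distances *)
  is_shortest_dist adj c dhat ->
  exists z : R,
    [/\ is_opt_value p Phi adj c z,
        is_opt_value p Phi (@complete_adj V) dhat z &
        exists F : seq (V * V),
          [/\ r_forest p (@complete_adj V) F,
              forest_value p Phi dhat F z &
              (#|nonterminals p F| <= 2 * r - 2)%N]].
Proof.
move=> adjsym adjirr conn cpos r2 pne puniq Phim sd.
have dnn := d_nn cpos sd.
have dsym := d_sym adjsym cpos sd.
have dtri := d_tri sd.
have [z [s [fs os mz rf [fv cnt]]]] := hat_main dnn dsym dtri Phim pne puniq r2.
have [s' [fs' ob']] := hat_to_G adjsym cpos Phim sd fs.
exists z; split.
- split.
    exists s'; split => //; apply/le_anti/andP; split; first by rewrite -os.
    have [fh oh] := G_to_hat adjirr Phim sd fs'.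
    exact: le_trans (mz _ fh) oh.
  move=> t ft; have [fh oh] := G_to_hat adjirr Phim sd ft.
  exact: le_trans (mz _ fh) oh.
- by split; [exists s | exact: mz].
- by exists s.
Qed.
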